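(* Let $(S,\mathcal{E}^Q)$ be a quantitative evidence frame with $\mathcal{E}^Q=\{(E_1,p_1),\dots,(E_m,p_m)\}$, $p_j\in(0,1)$ for all $j$. Let $d:2^{\mathcal{E}}\to\tau_{\mathcal{E}}$ be given by $d(\emptyset)=S$ and, for nonempty $\mathbf{E}\subseteq\mathcal{E}$, $d(\mathbf{E})$ the least (w.r.t. inclusion) element of $\tau_{\mathbf{E}}$ that is dense in $\bigcup\mathbf{E}$ w.r.t. $\tau_{\mathbf{E}}$ (such a least element exists). Let $\mathcal{J}_{SD}$ be the set of all $D\in\tau_{\mathcal{E}}$ such that $D\cap T\neq\emptyset$ for all nonempty $T\in\tau_{\mathcal{E}}$. Let $B:2^S\to\{0,1\}$ be defined by $B(P)=1$ iff there exists $D\in\tau_{\mathcal{E}}$ with $D\subseteq P$ and $D\cap T\neq\emptyset$ for all $T\in\tau_{\mathcal{E}}\setminus\{\emptyset\}$. Then for every $P\subseteq S$: $B(P)=1$ if and only if $\mathrm{Bel}_{\mathcal{J}_{SD}}(d,P)>0$.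
   Context: A quantitative evidence frame is a pair $(S,\mathcal{E}^Q)$ where $S$ is a finite nonempty set and $\mathcal{E}^Q=\{(E_1,p_1),\dots,(E_m,p_m)\}$ with $E_1,\dots,E_m$ distinct, $p_j\in(0,1)$, and $\mathcal{E}=\{E_1,\dots,E_m\}$ a nonempty family of subsets of $S$ with $\emptyset\notin\mathcal{E}$, $S\notin\mathcal{E}$. For $\mathbf{E}\subseteq 2^S$, $\tau_{\mathbf{E}}$ is the topology on $S$ generated by $\mathbf{E}$: $\emptyset$, $S$, all finite intersections of members of $\mathbf{E}$, and all unions of such. For $\mathbf{E}\subseteq\mathcal{E}$, $D\in\tau_{\mathbf{E}}$ is dense in $\bigcup\mathbf{E}$ w.r.t. $\tau_{\mathbf{E}}$ if $D\cap T\neq\emptyset$ for all nonempty $T\in\tau_{\mathbf{E}}$. Define $\delta(\mathbf{E})=\prod_{E_j\in\mathbf{E}}p_j\prod_{E_j\notin\mathbf{E}}(1-p_j)$ for $\mathbf{E}\subseteq\mathcal{E}$; for $f:2^{\mathcal{E}}\to\tau_{\mathcal{E}}$, $\delta_\tau(f,T)=\sum_{\mathbf{E}\subseteq\mathcal{E}:\,f(\mathbf{E})=T}\delta(\mathbf{E})$ if $T\in\tau_{\mathcal{E}}$ and $0$ otherwise; for $\mathcal{J}\subseteq\tau_{\mathcal{E}}$, $\delta_{\mathcal{J}}(f,A)=\delta_\tau(f,A)/\sum_{T\in\mathcal{J}}\delta_\tau(f,T)$ if $A\in\mathcal{J}$ and $0$ otherwise; $\mathrm{Bel}_{\mathcal{J}}(f,P)=\sum_{A\subseteq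 P}\delta_{\mathcal{J}}(f,A)$. *)

(* Defs.v *)
From HB Require Import structures.
From mathcomp Require Import all_boot all_order all_algebra.
Set Implicit Arguments. Unset Strict Implicit. Unset Printing Implicit Defensive.
Import Order.TTheory GRing.Theory Num.Theory.

Section Defs.
Variable S : finType.

(* topology on S generated by a family F : unions of finite intersections of
   members of F (empty intersection = S, empty union = set0) *)
Definition basics (F : {set {set S}}) : {set {set S}} :=
  [set (\bigcap_(X in G) X) | G : {set {set S}} in powerset F].
Definition tau (F : {set {set S}}) : {set {set S}} :=
  [set (\bigcup_(B in H) B) | H : {set {set S}} in powerset (basics F)].

Definition dense (F : {set {set S}}) (D : {set S}) : bool :=
  (D \in tau F) && [forall T in tau F, (T != set0) ==> (D :&: T != set0)].

Variable m : nat.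
Variable E : 'I_m -> {set S}.

Definition fam (I : {set 'I_m}) : {set {set S}} := E @: I.
Definition tauE : {set {set S}} := tau (fam setT).

Definition least_dense (I : {set 'I_m}) : {set S} :=
  match [pick D | dense (fam I) D &&
           [forall D', dense (fam I) D' ==> (D \subset D')]] with
  | Some D => D
  | None => setT
  end.
Definition dmap (I : {set 'I_m}) : {set S} :=
  if I == set0 then setT else least_dense I.

Definition J_SD : {set {set S}} := [set D | dense (fam setT) D].

Definition Bfun (P : {set S}) : bool :=
  [exists D, dense (fam setT) D && (D \subset P)].

Local Open Scope ring_scope.
Variable R : realFieldType.
Variable p : 'I_m -> R.

Definition delta (I : {set 'I_m}) : R :=
  (\prod_(j in I) p j) * (\prod_(j in ~: I) (1 - p j)).
Definition delta_tau (f : {set 'I_m} -> {set S}) (T : {set S}) : R :=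
  if T \in tauE then \sum_(I : {set 'I_m} | f I == T) delta I else 0.
Definition delta_J (J : {set {set S}}) (f : {set 'I_m} -> {set S}) (A : {set S}) : R :=
  if A \in J then delta_tau f A / (\sum_(T in J) delta_tau f T) else 0.
Definition Bel (J : {set {set S}}) (f : {set 'I_m} -> {set S}) (P : {set S}) : R :=
  \sum_(A : {set S} | A \subset P) delta_J J f A.
End Defs.

(* Main.v *)
Require Import Defs.
From HB Require Import structures.
From mathcomp Require Import all_boot all_order all_algebra.
Import Order.TTheory GRing.Theory Num.Theory.
Local Open Scope ring_scope.

Section T.
Variable S : finType.
Variable F : {set {set S}}.

Lemma tauT : setT \in tau F.
Proof.
apply/imsetP; exists [set setT]; last by rewrite big_set1.
rewrite inE sub1set; apply/imsetP; exists set0; first by rewrite inE sub0set.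
by rewrite big_set0.
Qed.

Lemma tauI A B : A \in tau F -> B \in tau F -> A :&: B \in tau F.
Proof.
move=> /imsetP[H1 H1s ->] /imsetP[H2 H2s ->].
rewrite !inE in H1s H2s.
apply/imsetP; exists [set X :&: Y | X in H1, Y in H2].
  rewrite inE; apply/subsetP => Z /imset2P[X Y XH YH ->].
  have /imsetP[G1 G1s ->] := subsetP H1s X XH.
  have /imsetP[G2 G2s ->] := subsetP H2s Y YH.
  apply/imsetP; exists (G1 :|: G2); last by rewrite bigcap_setU.
  by rewrite !inE in G1s G2s *; rewrite subUset G1s G2s.
apply/setP => x; rewrite inE; apply/andP/bigcupP.
  by case=> /bigcupP[X XH xX] /bigcupP[Y YH xY]; exists (X :&: Y);
    [apply/imset2P; exists X Y | rewrite inE xX].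
case=> Z /imset2P[X Y XH YH ->]; rewrite inE => /andP[xX xY].
split; apply/bigcupP; [exists X | exists Y]; done.
Qed.

Lemma denseT : dense F setT.
Proof.
rewrite /dense tauT /=; apply/forall_inP => T _; rewrite setTI; exact/implyP.
Qed.

Lemma denseI A B : dense F A -> dense F B -> dense F (A :&: B).
Proof.
move=> /andP[At /forall_inP dA] /andP[Bt /forall_inP dB].
rewrite /dense tauI //=; apply/forall_inP => T Tt; apply/implyP => T0.
rewrite -setIA; move/implyP: (dA _ (tauI _ _ Bt Tt)); apply.
by move/implyP: (dB T Tt); apply.
Qed.

Lemma least_exists : exists D, dense F D && [forall D', dense F D' ==> (D \subset D')].
Proof.
exists (\bigcap_(D | dense F D) D); apply/andP; split.
  by apply: (big_ind (dense F)) => //; [exact: denseT | exact: denseI].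
by apply/forallP => D'; apply/implyP => dD; apply: bigcap_inf.
Qed.
End T.

Lemma pos_add (R : realFieldType) (x y : R) : 0 < x -> 0 <= y -> 0 < x + y.
Proof. by move=> hx hy; apply: (lt_le_trans hx); rewrite lerDl. Qed.

Theorem proposition6 (R : realFieldType) (S : finType) (m : nat)
  (E : 'I_m -> {set S}) (p : 'I_m -> R) :
  (0 < #|S|)%N ->
  (0 < m)%N ->
  injective E ->
  (forall j, E j != set0) ->
  (forall j, E j != setT) ->
  (forall j, 0 < p j < 1) ->
  forall P : {set S},
    Bfun E P <-> 0 < Bel E p (J_SD E) (dmap E) P.
Proof.
move=> S0 m0 injE E0 ET p01 P.
have dpos I : 0 < delta p I.
  rewrite /delta; apply: mulr_gt0; apply: prodr_gt0 => j _;
    have /andP[a b] := p01 j; [done | by rewrite subr_gt0].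
have dtau_ge0 T : 0 <= delta_tau E p (dmap E) T.
  rewrite /delta_tau; case: ifP => // _; apply: sumr_ge0 => I _; exact: ltW.
have Z_ge0 : 0 <= \sum_(T in J_SD E) delta_tau E p (dmap E) T.
  by apply: sumr_ge0 => T _.
have dJ_ge0 A : 0 <= delta_J E p (J_SD E) (dmap E) A.
  by rewrite /delta_J; case: ifP => // _; apply: divr_ge0.
split.
- case/existsP => D /andP[dD DP].
  have [D1 HD1] := @least_exists _ (fam E setT).
  set D0 := least_dense E setT.
  have : dense (fam E setT) D0 && [forall D', dense (fam E setT) D' ==> (D0 \subset D')].
    rewrite /D0 /least_dense; case: pickP => [D2 -> // | /(_ D1)].
    by rewrite HD1.
  move=> /andP[dD0 /forallP minD0].
  have dmT : dmap E setT = D0.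
    rewrite /dmap; case: eqP => // /setP/(_ (Ordinal m0)); by rewrite !inE.
  have D0P : D0 \subset P := subset_trans (implyP (minD0 D) dD) DP.
  have D0J : D0 \in J_SD E by rewrite inE.
  have D0t : D0 \in tauE E by case/andP: dD0.
  have dt0 : 0 < delta_tau E p (dmap E) D0.
    rewrite /delta_tau D0t (bigD1 setT) /=; last by rewrite dmT.
    apply: pos_add => //; apply: sumr_ge0 => I _; exact: ltW.
  rewrite /Bel (bigD1 D0) //=; apply: pos_add; last by apply: sumr_ge0.
  rewrite /delta_J D0J; apply: divr_gt0 => //.
  rewrite (bigD1 D0) //=; apply: pos_add => //; by apply: sumr_ge0.
- move=> H; case: (boolP (Bfun E P)) => // nB.
  rewrite /Bel big1 ?ltxx // in H.
  move=> A AP; rewrite /delta_J; case: ifP => // AJ.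
  exfalso; move/negP: nB; apply; apply/existsP; exists A.
  by rewrite inE in AJ; rewrite AJ AP.
Qed.
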